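(* For each $d\ge 4$, there are at least $2^{d-3}$ finitely constrained subgroups of $\mathrm{Aut}(X^* )$ defined by patterns of size $d$ with Hausdorff dimension $1-\frac{2}{2^{d-1}}$ that are not topologically finitely generated.
   Context: Let $X=\{0,1\}$, $X^*$ the rooted binary tree of finite words, $G=\mathrm{Aut}(X^* )$, $G(d)$ the automorphism group of the finite tree of words of length $\le d$. Sections $g(wv)=g(w)g_w(v)$; $\pi_k$ restriction to words of length $\le k$. A subgroup $P\le G(d)$ is an essential pattern group if for every $p\in P$ and $i\in\{0,1\}$ there is $q\in P$ with $\pi_{d-1}(q)=p_i$; $G_P=\{g\in G:\pi_d(g_w)\in P\ \forall w\}$. A subgroup is finitely constrained if it equals some $G_P$, and defined by patterns of size $d$ if $d$ is the minimal such size. $\mathrm{Hdim}(K)=\liminf_n\log_2|K(n)|/\log_2|G(n)|$ with $K(n)=\pi_n(K)$. A closed subgroup is topologically finitely generated if it contains a finitely generated subgroup dense in the profinite topology. *)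

(* Defs.v *)
From Stdlib Require Import Reals List Arith.
Import ListNotations.

(** Words over X = {0,1} (false = 0, true = 1). *)
Definition word := list bool.

Definition tmap := word -> word.

Definition is_aut (g : tmap) : Prop :=
  (forall w, length (g w) = length w) /\
  (forall w v, exists u, g (w ++ v) = g w ++ u) /\
  (forall w w', g w = g w' -> w = w') /\
  (forall u, exists w, g w = u).

(** f is (a representative of) an automorphism of the finite tree of words
    of length <= d, i.e. an element of G(d); values on longer words are
    irrelevant. *)
Definition is_fin_aut (d : nat) (f : tmap) : Prop :=
  (forall w, length w <= d -> length (f w) = length w) /\
  (forall w v, length (w ++ v) <= d -> exists u, f (w ++ v) = f w ++ u) /\
  (forall w w', length w <= d -> length w' <= d -> f w = f w' -> w = w') /\
  (forall u, length u <= d -> exists w, length w <= d /\ f w = u).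

Definition agree (k : nat) (f f' : tmap) : Prop :=
  forall w, length w <= k -> f w = f' w.

(** Section g_w, defined by g(wv) = g(w) g_w(v). *)
Definition section (g : tmap) (w : word) : tmap :=
  fun v => skipn (length w) (g (w ++ v)).

(** P (a set of elements of G(d), given by representatives, closed under
    agreement on words of length <= d) is a subgroup of G(d). *)
Definition pattern_group (d : nat) (P : tmap -> Prop) : Prop :=
  (forall f f', agree d f f' -> P f -> P f') /\
  (forall f, P f -> is_fin_aut d f) /\
  P (fun w => w) /\
  (forall f h, P f -> P h -> P (fun w => f (h w))) /\
  (forall f, P f -> exists h, P h /\ agree d (fun w => h (f w)) (fun w => w)).

Definition essential (d : nat) (P : tmap -> Prop) : Prop :=
  forall p, P p -> forall i : bool,
    exists q, P q /\ agree (d - 1) q (section p [i]).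

Definition G_P (P : tmap -> Prop) (g : tmap) : Prop :=
  is_aut g /\ forall w, P (section g w).

Definition fc_of_size (K : tmap -> Prop) (d : nat) : Prop :=
  exists P, pattern_group d P /\ essential d P /\ (forall g, K g <-> G_P P g).

Definition defined_by_patterns_of_size (K : tmap -> Prop) (d : nat) : Prop :=
  fc_of_size K d /\ forall d', d' < d -> ~ fc_of_size K d'.

Fixpoint words_eq (n : nat) : list word :=
  match n with
  | 0 => [[]]
  | S m => flat_map (fun w => [false :: w; true :: w]) (words_eq m)
  end.
Definition words_upto (n : nat) : list word := flat_map words_eq (seq 0 (S n)).

(** pi_n(g), encoded as the list of images of all words of length <= n. *)
Definition restr (n : nat) (g : tmap) : list word := map g (words_upto n).

Definition card_level (K : tmap -> Prop) (n N : nat) : Prop :=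
  exists s : list (list word), length s = N /\ NoDup s /\
    forall x, In x s <-> exists g, K g /\ x = restr n g.

Open Scope R_scope.

Definition log2 (x : R) : R := ln x / ln 2.

Definition is_liminf (u : nat -> R) (a : R) : Prop :=
  (forall eps, 0 < eps -> exists N, forall n, (N <= n)%nat -> a - eps < u n) /\
  (forall eps, 0 < eps -> forall N, exists n, (N <= n)%nat /\ u n < a + eps).

Definition Hdim (K : tmap -> Prop) (a : R) : Prop :=
  exists NK NG : nat -> nat,
    (forall n, card_level K n (NK n)) /\
    (forall n, card_level is_aut n (NG n)) /\
    is_liminf (fun n => log2 (INR (NK n)) / log2 (INR (NG n))) a.

Close Scope R_scope.

Inductive gen (gs : list tmap) : tmap -> Prop :=
| gen_id : gen gs (fun w => w)
| gen_mul : forall s h, In s gs -> gen gs h -> gen gs (fun w => s (h w))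
| gen_inv : forall s t h, In s gs -> (forall w, t (s w) = w) ->
    (forall w, s (t w) = w) -> gen gs h -> gen gs (fun w => t (h w)).

(** K is topologically finitely generated: some finitely generated subgroup
    H = <gs> of K is dense in K for the profinite topology,
    i.e. pi_n(H) = pi_n(K) for all n. *)
Definition top_fin_gen (K : tmap -> Prop) : Prop :=
  exists gs : list tmap, (forall s, In s gs -> K s) /\
    forall n g, K g -> exists h, gen gs h /\ agree n h g.

(* Main.v *)
Require Import Defs.
From Stdlib Require Import Reals List Arith Lia Lra Bool Permutation Classical.
Import ListNotations.

Definition xsum {A} (l : list A) (F : A -> bool) : bool :=
  fold_right (fun x acc => xorb (F x) acc) false l.

Lemma xsum_app {A} (l1 l2 : list A) F : xsum (l1 ++ l2) F = xorb (xsum l1 F) (xsum l2 F).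
Proof. induction l1; simpl; auto. rewrite IHl1. now rewrite xorb_assoc. Qed.

Lemma xsum_ext_in {A} (l : list A) F G : (forall x, In x l -> F x = G x) -> xsum l F = xsum l G.
Proof. induction l; simpl; intros H; auto. rewrite H by auto. now rewrite IHl by auto. Qed.

Lemma xsum_xor {A} (l : list A) F G : xsum l (fun x => xorb (F x) (G x)) = xorb (xsum l F) (xsum l G).
Proof. induction l; simpl; auto. rewrite IHl. destruct (F a), (G a), (xsum l F), (xsum l G); reflexivity. Qed.

Lemma xsum_false {A} (l : list A) : xsum l (fun _ => false) = false.
Proof. induction l; simpl; auto. Qed.

Lemma xsum_zero {A} (l : list A) F : (forall x, In x l -> F x = false) -> xsum l F = false.
Proof. intros H. rewrite (xsum_ext_in l F (fun _ => false)) by auto. apply xsum_false. Qed.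

Lemma xsum_andl {A} (l : list A) c F : xsum l (fun x => c && F x) = c && xsum l F.
Proof. induction l; simpl. destruct c; auto. rewrite IHl. destruct c, (F a); auto. Qed.

Lemma xsum_perm {A} (l l' : list A) F : Permutation l l' -> xsum l F = xsum l' F.
Proof. induction 1; simpl; auto. rewrite IHPermutation; auto.
  destruct (F x), (F y), (xsum l F); auto. congruence. Qed.

Lemma xsum_map {A B} (l : list A) (f : A -> B) F : xsum (map f l) F = xsum l (fun x => F (f x)).
Proof. induction l; simpl; auto. now rewrite IHl. Qed.

Lemma xsum_flat_map {A B} (l : list A) (f : A -> list B) F :
  xsum (flat_map f l) F = xsum l (fun x => xsum (f x) F).
Proof. induction l; simpl; auto. rewrite xsum_app. now rewrite IHl. Qed.

Lemma xsum_ind {A} (dec : forall x y : A, {x = y} + {x <> y}) (l : list A) (x0 : A) :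
  NoDup l -> xsum l (fun x => if dec x x0 then true else false) =
    if in_dec dec x0 l then true else false.
Proof.
  induction 1; simpl; auto.
  destruct (dec x x0) as [e|ne]; destruct (in_dec dec x0 l) as [i|ni].
  - subst; contradiction.
  - destruct (dec x x0); [|congruence]. rewrite IHNoDup. destruct (in_dec dec x0 l); [contradiction|]. auto.
  - destruct (dec x x0); [congruence|]. rewrite IHNoDup. destruct (in_dec dec x0 l); [|contradiction]. auto.
  - destruct (dec x x0); [congruence|]. rewrite IHNoDup. destruct (in_dec dec x0 l); [contradiction|]. auto.
Qed.

Definition weq := list_eq_dec Bool.bool_dec.
Definition indw (x0 : word) (x : word) : bool := if weq x x0 then true else false.

Lemma words_eq_In k w : In w (words_eq k) <-> length w = k.
Proof.
  revert w; induction k; intros w; simpl.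
  - split. intros [H|[]]; subst; auto. destruct w; simpl; try discriminate; auto.
  - rewrite in_flat_map. split.
    + intros [u [Hu Hw]]. apply IHk in Hu. simpl in Hw. destruct Hw as [<-|[<-|[]]]; simpl; auto.
    + destruct w as [|c w]; simpl; try discriminate. intros H. exists w. split. apply IHk; lia.
      destruct c; simpl; auto.
Qed.

Lemma fm2_NoDup (l : list word) : NoDup l -> NoDup (flat_map (fun w => [false :: w; true :: w]) l).
Proof.
  induction 1 as [|x l Hx Hl IH]; simpl. constructor.
  assert (Hin : forall c y, In (c :: y) (flat_map (fun w => [false :: w; true :: w]) l) -> In y l).
  { intros c y Hy. apply in_flat_map in Hy. destruct Hy as [u [Hu Hy]]. simpl in Hy.
    destruct Hy as [Hy|[Hy|[]]]; injection Hy; intros; subst; auto. }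
  constructor. simpl. intros [Hc|Hc]. discriminate. apply Hin in Hc. contradiction.
  constructor. intros Hc. apply Hin in Hc. contradiction. auto.
Qed.

Lemma words_eq_NoDup k : NoDup (words_eq k).
Proof. induction k; simpl. constructor; auto. constructor. now apply fm2_NoDup. Qed.

Lemma words_eq_length k : length (words_eq k) = 2 ^ k.
Proof.
  induction k; simpl; auto.
  assert (H : forall l : list word, length (flat_map (fun w => [false :: w; true :: w]) l) = 2 * length l).
  { induction l; simpl; auto. rewrite IHl. lia. }
  rewrite H, IHk. lia.
Qed.

Lemma xsum_words_S (a : word -> bool) k :
  xsum (words_eq (S k)) a = xorb (xsum (words_eq k) (fun u => a (false :: u))) (xsum (words_eq k) (fun u => a (true :: u))).
Proof.
  simpl. rewrite xsum_flat_map. rewrite <- xsum_xor. apply xsum_ext_in. intros. simpl.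
  now rewrite xorb_false_r.
Qed.


Definition port (g : tmap) (w : word) : bool := nth (length w) (g (w ++ [false])) false.

Fixpoint act (a : word -> bool) (w : word) : word :=
  match w with [] => [] | x :: w' => xorb x (a []) :: act (fun u => a (x :: u)) w' end.
Fixpoint invact (a : word -> bool) (w : word) : word :=
  match w with [] => [] | y :: w' => xorb y (a []) :: invact (fun u => a (xorb y (a []) :: u)) w' end.

Lemma act_length a w : length (act a w) = length w.
Proof. revert a; induction w; simpl; auto. Qed.

Lemma act_app a w v : act a (w ++ v) = act a w ++ act (fun u => a (w ++ u)) v.
Proof. revert a; induction w; intros; simpl; auto. f_equal. now rewrite IHw. Qed.

Lemma act_snoc a w x : act a (w ++ [x]) = act a w ++ [xorb x (a w)].
Proof. rewrite act_app. simpl. now rewrite app_nil_r. Qed.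

Lemma act_ext_upto a b w : (forall x, length x < length w -> a x = b x) -> act a w = act b w.
Proof.
  revert a b; induction w; intros a' b' H; simpl; auto.
  rewrite (H []) by (simpl; lia). f_equal. apply IHw. intros x Hx. apply H. simpl; lia.
Qed.

Lemma port_act a w : port (act a) w = a w.
Proof. unfold port. rewrite act_snoc. rewrite <- (act_length a w) at 1. rewrite nth_middle. now destruct (a w). Qed.

Lemma act_invact a u : act a (invact a u) = u.
Proof. revert a; induction u as [|y u IH]; intros b; simpl; auto. rewrite IH. f_equal. now destruct y, (b []). Qed.

Lemma invact_act a w : invact a (act a w) = w.
Proof. revert a; induction w as [|x w IH]; intros b; simpl; auto. replace (xorb (xorb x (b [])) (b [])) with x by (destruct x, (b []); auto).
  now rewrite IH. Qed.

Lemma is_aut_act a : is_aut (act a).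
Proof.
  split; [|split; [|split]].
  - intros; apply act_length.
  - intros w v. rewrite act_app. eauto.
  - intros w w' H. rewrite <- (invact_act a w), <- (invact_act a w'). now rewrite H.
  - intros u. exists (invact a u). apply act_invact.
Qed.

Lemma is_aut_ext f g : (forall w, f w = g w) -> is_aut f -> is_aut g.
Proof.
  intros E [H1 [H2 [H3 H4]]]. split; [|split; [|split]].
  - intros w; rewrite <- E; auto.
  - intros w v. rewrite <- !E. auto.
  - intros w w'. rewrite <- !E. auto.
  - intros u. destruct (H4 u) as [w Hw]. exists w. now rewrite <- E.
Qed.

Lemma port_ext f g w : (forall x, f x = g x) -> port f w = port g w.
Proof. intros E. unfold port. now rewrite E. Qed.

Lemma aut_snoc g w x : is_aut g -> g (w ++ [x]) = g w ++ [xorb x (port g w)].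
Proof.
  intros [H1 [H2 [H3 H4]]].
  assert (Hs : forall y, exists b, g (w ++ [y]) = g w ++ [b]).
  { intros y. destruct (H2 w [y]) as [u Hu]. pose proof (H1 (w ++ [y])) as L. rewrite Hu, !length_app, H1 in L.
    simpl in L. destruct u as [|b [|]]; simpl in L; try lia. eauto. }
  destruct (Hs false) as [b0 E0]. assert (Hp : port g w = b0).
  { unfold port. rewrite E0. rewrite <- (H1 w) at 1. now rewrite nth_middle. }
  subst b0. destruct x; simpl; [|now rewrite E0].
  destruct (Hs true) as [b1 E1]. rewrite E1. destruct (bool_dec b1 (port g w)) as [e|ne].
  - subst. rewrite <- E0 in E1. apply H3 in E1. apply app_inv_head in E1. discriminate.
  - destruct b1, (port g w); simpl; congruence.
Qed.

Lemma aut_act g : is_aut g -> forall w, g w = act (port g) w.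
Proof.
  intros Ha w. induction w using rev_ind.
  - destruct Ha as [H1 _]. specialize (H1 []). destruct (g []); simpl in *; auto; discriminate.
  - rewrite aut_snoc by auto. rewrite act_snoc. now rewrite IHw.
Qed.

Lemma section_act g w : is_aut g -> forall v, section g w v = act (fun u => port g (w ++ u)) v.
Proof.
  intros Ha v. unfold section. rewrite (aut_act g Ha). rewrite act_app.
  rewrite <- (act_length (port g) w) at 1. now rewrite skipn_app, skipn_all, Nat.sub_diag.
Qed.

Lemma port_section g w u : is_aut g -> port (section g w) u = port g (w ++ u).
Proof. intros Ha. rewrite (port_ext _ _ _ (section_act g w Ha)). now rewrite port_act. Qed.

Lemma is_aut_section g w : is_aut g -> is_aut (section g w).
Proof. intros Ha. apply (is_aut_ext (act (fun u => port g (w ++ u)))). intros; now rewrite section_act. apply is_aut_act. Qed.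

Lemma aut_length g w : is_aut g -> length (g w) = length w.
Proof. intros [H _]; auto. Qed.

Lemma aut_app h w u : is_aut h -> h (w ++ u) = h w ++ section h w u.
Proof.
  intros Ha. rewrite section_act by auto. rewrite !(aut_act h Ha). apply act_app.
Qed.

Lemma port_comp g h w : is_aut g -> is_aut h ->
  port (fun x => g (h x)) w = xorb (port h w) (port g (h w)).
Proof.
  intros Hg Hh. unfold port at 1. rewrite (aut_snoc h) by auto. rewrite (aut_snoc g) by auto.
  replace (length w) with (length (g (h w))) by (rewrite !aut_length; auto).
  rewrite nth_middle. now destruct (port h w).
Qed.

Lemma is_aut_comp g h : is_aut g -> is_aut h -> is_aut (fun x => g (h x)).
Proof.
  intros Hg Hh.
    destruct Hg as [G1 [G2 [G3 G4]]], Hh as [H1 [H2 [H3 H4]]]. split; [|split; [|split]].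
    + intros w. rewrite G1; auto.
    + intros w v. destruct (H2 w v) as [u Hu]. rewrite Hu. apply G2.
    + intros w w' E. apply H3, G3, E.
    + intros u. destruct (G4 u) as [y Hy]. destruct (H4 y) as [w Hw]. exists w. now rewrite Hw.
Qed.

Lemma app_eq_len {A} (a b c e : list A) : length a = length c -> a ++ b = c ++ e -> a = c /\ b = e.
Proof.
  revert c; induction a as [|x a IH]; intros [|y c] L E; simpl in *; try lia; auto.
  injection E; intros E2 E1. subst. destruct (IH c ltac:(lia) E2). subst; auto.
Qed.

Lemma inv_aut g t : is_aut g -> (forall w, g (t w) = w) -> (forall w, t (g w) = w) -> is_aut t.
Proof.
  intros Hg E1 E2. pose proof Hg as [G1 [G2 [G3 G4]]]. split; [|split; [|split]].
  - intros w. rewrite <- (G1 (t w)). now rewrite E1.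
  - intros w v. set (x := t (w ++ v)).
    assert (Hx : g x = w ++ v) by apply E1.
    assert (Lx : length x = length (w ++ v)) by (rewrite <- G1, Hx; auto).
    destruct (G2 (firstn (length w) x) (skipn (length w) x)) as [u Hu].
    rewrite firstn_skipn, Hx in Hu.
    assert (L1 : length (g (firstn (length w) x)) = length w) by (rewrite G1, length_firstn; rewrite length_app in Lx; lia).
    destruct (app_eq_len w v _ u (eq_sym L1) Hu) as [Hw _].
    assert (Ht : t w = firstn (length w) x) by (rewrite Hw at 1; apply E2).
    exists (skipn (length w) x). rewrite Ht. symmetry. apply firstn_skipn.
  - intros w w' E. rewrite <- (E1 w), <- (E1 w'). now rewrite E.
  - intros u. exists (g u). auto.
Qed.

Lemma port_idlike f w : (forall x, f x = x) -> port f w = false.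
Proof. intros E. unfold port. rewrite E. now rewrite nth_middle. Qed.

Lemma map_NoDup_inj {A B} (f : A -> B) l : (forall x y, f x = f y -> x = y) -> NoDup l -> NoDup (map f l).
Proof. intros Hf; induction 1; simpl; constructor; auto. rewrite in_map_iff. intros [y [Hy Hy']]. apply Hf in Hy. subst; auto. Qed.

Lemma perm_act b k : Permutation (map (act b) (words_eq k)) (words_eq k).
Proof.
  apply NoDup_Permutation.
  - apply map_NoDup_inj. intros x y E. now rewrite <- (invact_act b x), <- (invact_act b y), E.
    apply words_eq_NoDup.
  - apply words_eq_NoDup.
  - intros x. rewrite in_map_iff. split.
    + intros [y [<- Hy]]. apply words_eq_In. apply words_eq_In in Hy. now rewrite act_length.
    + intros Hx. exists (invact b x). split. apply act_invact. apply words_eq_In. apply words_eq_In in Hx.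
      rewrite <- Hx. rewrite <- (act_length b (invact b x)). now rewrite act_invact.
Qed.

Lemma xsum_section h w k F : is_aut h ->
  xsum (words_eq k) (fun u => F (section h w u)) = xsum (words_eq k) F.
Proof.
  intros Ha. rewrite (xsum_ext_in _ _ (fun u => F (act (fun u => port h (w ++ u)) u))).
  rewrite <- (xsum_map _ (act (fun u => port h (w ++ u))) F). apply xsum_perm, perm_act.
  intros; now rewrite section_act.
Qed.

Lemma xsum_aut h k F : is_aut h -> xsum (words_eq k) (fun u => F (h u)) = xsum (words_eq k) F.
Proof. intros Ha. rewrite <- (xsum_section h [] k F Ha). apply xsum_ext_in. intros. unfold section. simpl. reflexivity. Qed.


Definition S (a : word -> bool) (v : word) (k : nat) : bool := xsum (words_eq k) (fun u => a (v ++ u)).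
Definition Jsum (d i : nat) (a : word -> bool) (v : word) : bool :=
  xsum (seq 1 (d - 3)) (fun j => Nat.testbit i (j - 1) && S a v j).
Definition Kc (d i : nat) (a : word -> bool) : Prop := forall v, v <> [] -> S a v (d - 2) = Jsum d i a v.
Definition Kg (d i : nat) (g : tmap) : Prop := is_aut g /\ Kc d i (port g).

Lemma S_ext a b v v' k : (forall u, length u = k -> a (v ++ u) = b (v' ++ u)) -> S a v k = S b v' k.
Proof. intros H. apply xsum_ext_in. intros u Hu. apply H. now apply words_eq_In. Qed.

Lemma Jsum_ext d i a b v v' : (forall j, 1 <= j <= d - 3 -> S a v j = S b v' j) -> Jsum d i a v = Jsum d i b v'.
Proof. intros H. apply xsum_ext_in. intros j Hj. apply in_seq in Hj. rewrite H by lia. auto. Qed.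

Lemma Kc_ext d i a b : (forall x, a x = b x) -> Kc d i a -> Kc d i b.
Proof.
  intros E H v Hv. rewrite <- (S_ext a b v v) by auto. rewrite <- (Jsum_ext d i a b v v).
  apply H; auto. intros; apply S_ext; auto.
Qed.

Lemma S_cocycle g h v k : is_aut g -> is_aut h ->
  S (port (fun x => g (h x))) v k = xorb (S (port h) v k) (S (port g) (h v) k).
Proof.
  intros Hg Hh. unfold S.
  rewrite (xsum_ext_in _ _ (fun u => xorb (port h (v ++ u)) (port g (h v ++ section h v u)))).
  - rewrite xsum_xor. f_equal. apply (xsum_section h v k (fun u => port g (h v ++ u)) Hh).
  - intros u _. rewrite port_comp by auto. now rewrite aut_app by auto.
Qed.

Lemma Jsum_cocycle d i g h v : is_aut g -> is_aut h ->
  Jsum d i (port (fun x => g (h x))) v = xorb (Jsum d i (port h) v) (Jsum d i (port g) (h v)).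
Proof.
  intros Hg Hh. unfold Jsum. rewrite <- xsum_xor. apply xsum_ext_in. intros j _.
  rewrite S_cocycle by auto. destruct (Nat.testbit i (j-1)); auto.
Qed.

Lemma S_zero a v k : (forall x, a x = false) -> S a v k = false.
Proof. intros H. apply xsum_zero. auto. Qed.

Lemma Jsum_zero d i a v : (forall x, a x = false) -> Jsum d i a v = false.
Proof. intros H. apply xsum_zero. intros. rewrite S_zero; auto. now destruct Nat.testbit. Qed.

Lemma Kg_id d i : Kg d i (fun w => w).
Proof.
  split. apply (is_aut_ext (act (fun _ => false))). induction w; simpl; auto. rewrite xorb_false_r. f_equal. exact IHw.
  apply is_aut_act. intros v _. rewrite S_zero, Jsum_zero; auto; intros; now apply port_idlike.
Qed.

Lemma aut_nonnil g v : is_aut g -> v <> [] -> g v <> [].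
Proof. intros Ha Hv E. apply Hv. apply length_zero_iff_nil. rewrite <- (aut_length g v Ha), E. auto. Qed.

Lemma Kg_comp d i g h : Kg d i g -> Kg d i h -> Kg d i (fun x => g (h x)).
Proof.
  intros [Hg Kg'] [Hh Kh]. split. now apply is_aut_comp.
  intros v Hv. rewrite S_cocycle, Jsum_cocycle by auto. rewrite Kh by auto. rewrite Kg' by (apply aut_nonnil; auto). auto.
Qed.

Lemma Kg_inv d i s t : Kg d i s -> (forall w, s (t w) = w) -> (forall w, t (s w) = w) -> Kg d i t.
Proof.
  intros [Hs Ks] E1 E2. assert (Ht : is_aut t) by (eapply inv_aut; eauto).
  assert (Z : forall v k, S (port t) v k = S (port s) (t v) k).
  { intros v k. pose proof (S_cocycle s t v k Hs Ht) as C. rewrite S_zero in C by (intros; now apply port_idlike).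
    destruct (S (port t) v k), (S (port s) (t v) k); simpl in *; congruence. }
  split; auto. intros v Hv. rewrite Z, Ks by (apply aut_nonnil; auto).
  apply Jsum_ext. intros; symmetry; apply Z.
Qed.

Lemma Kg_section d i g w : Kg d i g -> Kg d i (section g w).
Proof.
  intros [Hg Kg']. split. now apply is_aut_section.
  intros v Hv. assert (Z : forall k, S (port (section g w)) v k = S (port g) (w ++ v) k).
  { intros k. apply S_ext. intros u _. rewrite port_section by auto. now rewrite app_assoc. }
  rewrite Z. rewrite Kg'. apply Jsum_ext. intros; symmetry; apply Z.
  destruct w; simpl; auto. discriminate.
Qed.

Definition ginv (g : tmap) : tmap := invact (port g).

Lemma ginv_l g : is_aut g -> forall w, ginv g (g w) = w.
Proof. intros Ha w. unfold ginv. rewrite (aut_act g Ha w). apply invact_act. Qed.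
Lemma ginv_r g : is_aut g -> forall w, g (ginv g w) = w.
Proof. intros Ha w. unfold ginv. rewrite (aut_act g Ha). apply act_invact. Qed.


Definition zeros k : word := repeat false k.
Definition sz k (x : word) : bool := forallb negb (skipn (length x - k) x).
Definition desig d (x : word) : bool := (d - 1 <=? length x) && sz (d - 2) x.
Definition nz (u : word) : bool := negb (forallb negb u).

Fixpoint cf (d i : nat) (f : word -> bool) (n : nat) (x : word) : bool :=
  match n with
  | 0 => f x
  | Datatypes.S n' => if desig d x then
      let v := firstn (length x - (d - 2)) x in
      xorb (xsum (seq 1 (d - 3)) (fun j => Nat.testbit i (j - 1) &&
                 xsum (words_eq j) (fun u => cf d i f n' (v ++ u))))
           (xsum (filter nz (words_eq (d - 2))) (fun u => f (v ++ u)))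
      else f x
  end.
Definition compF d i f (x : word) : bool := cf d i f (length x) x.

Lemma forallb_negb_zeros u : forallb negb u = true <-> u = zeros (length u).
Proof.
  induction u as [|c u IH]; simpl. split; auto.
  destruct c; simpl. split; discriminate. rewrite IH. unfold zeros. simpl. split; intros H. now rewrite <- H. now injection H.
Qed.

Lemma desig_short d x : 4 <= d -> length x < d - 1 -> desig d x = false.
Proof. intros. unfold desig. replace (d - 1 <=? length x) with false; auto. symmetry; apply Nat.leb_gt; lia. Qed.

Lemma desig_app d v u : 4 <= d -> length u = d - 2 -> v <> [] -> desig d (v ++ u) = forallb negb u.
Proof.
  intros Hd Hu Hv. unfold desig, sz. rewrite length_app.
  assert (1 <= length v) by (destruct v; [congruence|simpl; lia]).
  replace (d - 1 <=? length v + length u) with true by (symmetry; apply Nat.leb_le; lia).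
  simpl. replace (length v + length u - (d - 2)) with (length v) by lia.
  rewrite skipn_app, skipn_all, Nat.sub_diag. auto.
Qed.

Lemma firstn_app_len (v u : word) k : length u = k -> firstn (length (v ++ u) - k) (v ++ u) = v.
Proof. intros Hu. rewrite length_app. replace (length v + length u - k) with (length v) by lia.
  rewrite firstn_app, firstn_all, Nat.sub_diag. simpl. apply app_nil_r. Qed.

Lemma desig_split d x : 4 <= d -> desig d x = true ->
  x = firstn (length x - (d - 2)) x ++ zeros (d - 2) /\ firstn (length x - (d - 2)) x <> [].
Proof.
  intros Hd H. unfold desig, sz in H. apply andb_prop in H. destruct H as [H1 H2].
  apply Nat.leb_le in H1. apply forallb_negb_zeros in H2. rewrite length_skipn in H2.
  replace (length x - (length x - (d - 2))) with (d - 2) in H2 by lia. split.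
  - rewrite <- H2. symmetry. apply firstn_skipn.
  - intros E. apply (f_equal (@length bool)) in E. rewrite length_firstn in E. simpl in E. lia.
Qed.

Lemma xsum_filter_split {A} (l : list A) p F :
  xsum l F = xorb (xsum (filter p l) F) (xsum (filter (fun x => negb (p x)) l) F).
Proof. induction l; simpl; auto. rewrite IHl. destruct (p a); simpl; destruct (F a), (xsum (filter p l) F), (xsum (filter (fun x => negb (p x)) l) F); auto. Qed.

Lemma xsum_zero_split k F : xsum (words_eq k) F = xorb (F (zeros k)) (xsum (filter nz (words_eq k)) F).
Proof.
  rewrite (xsum_filter_split _ nz). rewrite xorb_comm. f_equal.
  rewrite (xsum_perm _ [zeros k]). simpl. apply xorb_false_r.
  apply NoDup_Permutation. apply NoDup_filter, words_eq_NoDup. constructor; auto. constructor.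
  intros x. rewrite filter_In, words_eq_In. unfold nz. rewrite negb_involutive, forallb_negb_zeros. simpl.
  split. intros [H1 H2]. left. rewrite H2, H1. auto. intros [<-|[]]. unfold zeros. rewrite repeat_length. auto.
Qed.

Lemma cf_fuel d i f : 4 <= d -> forall N x n1 n2, length x <= N -> length x <= n1 -> length x <= n2 ->
  cf d i f n1 x = cf d i f n2 x.
Proof.
  intros Hd N. induction N; intros x n1 n2 HN H1 H2.
  - assert (desig d x = false) by (apply desig_short; lia). destruct n1, n2; simpl; rewrite ?H; auto.
  - destruct (desig d x) eqn:Ed.
    + assert (Lx : d - 1 <= length x) by (unfold desig in Ed; apply andb_prop in Ed; apply Nat.leb_le; tauto).
      destruct n1 as [|n1]; [lia|]. destruct n2 as [|n2]; [lia|]. simpl. rewrite Ed. f_equal.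
      apply xsum_ext_in. intros j Hj. apply in_seq in Hj. f_equal. apply xsum_ext_in. intros u Hu.
      apply words_eq_In in Hu. apply IHN; rewrite length_app, length_firstn; lia.
    + destruct n1, n2; simpl; rewrite ?Ed; auto.
Qed.

Lemma compF_eq d i f x : 4 <= d -> compF d i f x =
  if desig d x then
    xorb (Jsum d i (compF d i f) (firstn (length x - (d - 2)) x))
         (xsum (filter nz (words_eq (d - 2))) (fun u => f (firstn (length x - (d - 2)) x ++ u)))
  else f x.
Proof.
  intros Hd. unfold compF at 1. destruct (desig d x) eqn:Ed.
  - assert (Lx : d - 1 <= length x) by (unfold desig in Ed; apply andb_prop in Ed; apply Nat.leb_le; tauto).
    destruct (length x) eqn:L; [lia|]. simpl. rewrite Ed. rewrite L. f_equal. unfold Jsum, S.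
    apply xsum_ext_in. intros j Hj. apply in_seq in Hj. f_equal. apply xsum_ext_in. intros u Hu.
    apply words_eq_In in Hu. unfold compF. apply (cf_fuel d i f Hd (Datatypes.S n)); rewrite length_app, length_firstn; destruct (d - 2) eqn:E2; lia.
  - destruct (length x); simpl; rewrite ?Ed; auto.
Qed.

Lemma compF_free d i f x : 4 <= d -> desig d x = false -> compF d i f x = f x.
Proof. intros Hd H. rewrite compF_eq by auto. now rewrite H. Qed.

Lemma Kc_compF d i f : 4 <= d -> Kc d i (compF d i f).
Proof.
  intros Hd v Hv. unfold S at 1. rewrite xsum_zero_split.
  rewrite compF_eq by auto. rewrite desig_app by (unfold zeros; rewrite ?repeat_length; auto).
  replace (forallb negb (zeros (d - 2))) with true by (symmetry; apply forallb_negb_zeros; unfold zeros; now rewrite repeat_length).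
  rewrite firstn_app_len by (unfold zeros; now rewrite repeat_length).
  rewrite (xsum_ext_in _ (fun u => compF d i f (v ++ u)) (fun u => f (v ++ u))).
  - rewrite xorb_assoc, xorb_nilpotent, xorb_false_r. reflexivity.
  - intros u Hu. apply filter_In in Hu. destruct Hu as [Hu1 Hu2]. apply words_eq_In in Hu1.
    apply compF_free; auto. rewrite desig_app by auto. unfold nz in Hu2. now destruct (forallb negb u).
Qed.

Lemma compF_unique d i f a : 4 <= d -> Kc d i a -> forall n,
  (forall y, length y < n -> desig d y = false -> f y = a y) ->
  forall x, length x < n -> compF d i f x = a x.
Proof.
  intros Hd Ka n Hf. intros x. induction x as [x IH] using (well_founded_induction (Wf_nat.well_founded_ltof _ (@length bool))).
  intros Hx. destruct (desig d x) eqn:Ed.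
  - assert (Lx : d - 1 <= length x) by (unfold desig in Ed; apply andb_prop in Ed; apply Nat.leb_le; tauto).
    rewrite compF_eq by auto. rewrite Ed. destruct (desig_split d x Hd Ed) as [Ex Hv].
    set (v := firstn (length x - (d - 2)) x) in *.
    assert (Lv : length v + (d - 2) = length x) by (unfold v; rewrite length_firstn; lia).
    pose proof (Ka v Hv) as K. unfold S in K. rewrite xsum_zero_split in K. rewrite <- Ex in K.
    rewrite (Jsum_ext d i (compF d i f) a v v).
    + rewrite <- K. rewrite (xsum_ext_in _ (fun u => f (v ++ u)) (fun u => a (v ++ u))).
      * rewrite xorb_assoc, xorb_nilpotent, xorb_false_r. reflexivity.
      * intros u Hu. apply filter_In in Hu. destruct Hu as [Hu1 Hu2]. apply words_eq_In in Hu1.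
        apply Hf. rewrite length_app; lia. rewrite desig_app by auto. unfold nz in Hu2. now destruct (forallb negb u).
    + intros j Hj. apply S_ext. intros u Hu. apply IH; unfold Wf_nat.ltof; rewrite length_app; lia.
  - rewrite compF_free by auto. auto.
Qed.


Definition Pat d i (f : tmap) : Prop := exists k, Kg d i k /\ agree d f k.

Lemma port_agree n h g x : agree n h g -> length x < n -> port h x = port g x.
Proof. intros H Hx. unfold port. rewrite H; auto. rewrite length_app; simpl; lia. Qed.

Lemma fin_aut_of d f k : is_aut k -> agree d f k -> is_fin_aut d f.
Proof.
  intros [K1 [K2 [K3 K4]]] H. split; [|split; [|split]].
  - intros w Hw. rewrite H; auto.
  - intros w v Hwv. rewrite !H; auto. rewrite length_app in Hwv; lia.
  - intros w w' Hw Hw'. rewrite !H; auto.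
  - intros u Hu. destruct (K4 u) as [w Hw]. exists w. assert (length w <= d) by (rewrite <- K1, Hw; auto).
    split; auto. rewrite H; auto.
Qed.

Lemma Pat_group d i : 4 <= d -> pattern_group d (Pat d i).
Proof.
  intros Hd. split; [|split; [|split; [|split]]].
  - intros f f' Ha [k [Kk Hk]]. exists k. split; auto. intros w Hw. rewrite <- Ha; auto.
  - intros f [k [[Ha _] Hk]]. eapply fin_aut_of; eauto.
  - exists (fun w => w). split. apply Kg_id. intros w _; auto.
  - intros f h [kf [Kf Hf]] [kh [Kh Hh]]. exists (fun w => kf (kh w)). split. now apply Kg_comp.
    intros w Hw. rewrite Hh; auto. rewrite Hf; auto. rewrite aut_length; auto. apply Kh.
  - intros f [k [Kk Hk]]. exists (ginv k). split.
    + exists (ginv k). split; [|intros w _; auto]. apply (Kg_inv d i k); auto.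
      apply ginv_r, Kk. apply ginv_l, Kk.
    + intros w Hw. rewrite Hk; auto. apply ginv_l, Kk.
Qed.

Lemma Pat_essential d i : 4 <= d -> essential d (Pat d i).
Proof.
  intros Hd p [k [Kk Hk]] i0. exists (section k [i0]). split.
  - exists (section k [i0]). split. now apply Kg_section. intros w _; auto.
  - intros w Hw. unfold section. simpl. rewrite Hk; auto. simpl; lia.
Qed.

Lemma Pat_iff d i : 4 <= d -> forall g, Kg d i g <-> G_P (Pat d i) g.
Proof.
  intros Hd g. split.
  - intros Kk. split. apply Kk. intros w. exists (section g w). split. now apply Kg_section. intros x _; auto.
  - intros [Ha HP]. split; auto. intros v Hv. destruct (exists_last Hv) as [w [x Ew]]. rewrite Ew in *.
    destruct (HP w) as [k [[Hk Kk] Ag]].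
    assert (Z : forall j, j <= d - 2 -> S (port g) (w ++ [x]) j = S (port k) [x] j).
    { intros j Hj. apply S_ext. intros u Hu. rewrite <- (port_agree d (section g w) k). rewrite port_section; auto.
      now rewrite app_assoc. exact Ag. rewrite length_app; simpl; lia. }
    rewrite Z by lia. rewrite Kk by discriminate. apply Jsum_ext. intros; symmetry; apply Z; lia.
Qed.

Lemma fc_K d i : 4 <= d -> fc_of_size (Kg d i) d.
Proof. intros Hd. exists (Pat d i). split. now apply Pat_group. split. now apply Pat_essential. now apply Pat_iff. Qed.

Lemma all_aut_P d i d' P' : 4 <= d -> d' < d -> pattern_group d' P' -> (forall g, Kg d i g <-> G_P P' g) ->
  forall s, is_aut s -> P' s.
Proof.
  intros Hd Hd' [PG1 _] Hiff s Hs. set (k := act (compF d i (port s))).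
  assert (Kk : Kg d i k). { split. apply is_aut_act. eapply Kc_ext. intros x. symmetry. apply port_act. apply Kc_compF; auto. }
  apply Hiff in Kk. destruct Kk as [_ HP]. specialize (HP []).
  apply (PG1 _ s) in HP; auto. intros w Hw. unfold section. simpl. unfold k.
  rewrite (aut_act s Hs w). apply act_ext_upto. intros x Hx. apply compF_free; auto. apply desig_short; lia.
Qed.

Definition g0 (d : nat) : tmap := act (indw (zeros (d - 1))).

Lemma ind_cons c x0 u : indw (c :: x0) (c :: u) = indw x0 u.
Proof. unfold indw. destruct (weq (c :: u) (c :: x0)), (weq u x0); auto; congruence. Qed.

Lemma xsum_ind_words k x0 : xsum (words_eq k) (indw x0) = (length x0 =? k).
Proof.
  unfold indw. rewrite (xsum_ind weq). destruct (in_dec weq x0 (words_eq k)) as [H|H]; rewrite words_eq_In in H.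
  symmetry; apply Nat.eqb_eq; auto. symmetry; apply Nat.eqb_neq; auto. apply words_eq_NoDup.
Qed.

Lemma S_ind_false k x0 : S (indw (false :: x0)) [false] k = (length x0 =? k).
Proof. unfold S. simpl. rewrite (xsum_ext_in _ _ (indw x0)). apply xsum_ind_words. intros; apply ind_cons. Qed.

Lemma g0_notK d i : 4 <= d -> ~ Kg d i (g0 d).
Proof.
  intros Hd [_ K]. specialize (K [false] ltac:(discriminate)).
  assert (E : forall x, port (g0 d) x = indw (false :: zeros (d - 2)) x).
  { intros x. unfold g0. rewrite port_act. replace (d - 1) with (Datatypes.S (d - 2)) by lia. reflexivity. }
  rewrite (S_ext _ (indw (false :: zeros (d - 2))) _ [false]) in K by auto.
  rewrite (Jsum_ext d i _ (indw (false :: zeros (d - 2))) _ [false]) in K.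
  2: { intros; apply S_ext; auto. }
  rewrite S_ind_false in K. unfold Jsum in K. rewrite xsum_zero in K. unfold zeros in K. rewrite repeat_length, Nat.eqb_refl in K. discriminate.
  intros j Hj. apply in_seq in Hj. rewrite S_ind_false. unfold zeros; rewrite repeat_length.
  replace (d - 2 =? j) with false. now destruct Nat.testbit. symmetry; apply Nat.eqb_neq; lia.
Qed.

Lemma minimal_K d i : 4 <= d -> forall d', d' < d -> ~ fc_of_size (Kg d i) d'.
Proof.
  intros Hd d' Hd' [P' [PG [_ Hiff]]]. apply (g0_notK d i Hd). apply Hiff. split. apply is_aut_act.
  intros w. apply (all_aut_P d i d' P'); auto. apply is_aut_section, is_aut_act.
Qed.


Definition g1 d i p : tmap := act (compF d i (indw (zeros (p + 2)))).

Lemma Kg_act_compF d i f : 4 <= d -> Kg d i (act (compF d i f)).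
Proof. intros Hd. split. apply is_aut_act. eapply Kc_ext. intros x. symmetry. apply port_act. apply Kc_compF; auto. Qed.

Lemma g1_J d i p i' : 4 <= d -> p < d - 3 -> Jsum d i' (port (g1 d i p)) [false] = Nat.testbit i' p.
Proof.
  intros Hd Hp. unfold Jsum.
  rewrite (xsum_ext_in _ _ (fun j => Nat.testbit i' p && (if Nat.eq_dec j (p + 1) then true else false))).
  - rewrite xsum_andl. rewrite (xsum_ind Nat.eq_dec). destruct (in_dec Nat.eq_dec (p + 1) (seq 1 (d - 3))) as [H|H].
    apply andb_true_r. exfalso; apply H. apply in_seq. lia. apply seq_NoDup.
  - intros j Hj. apply in_seq in Hj.
    rewrite (S_ext _ (indw (false :: zeros (p + 1))) _ [false]).
    + rewrite S_ind_false. unfold zeros; rewrite repeat_length. destruct (Nat.eq_dec j (p + 1)).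
      subst j. replace (p + 1 - 1) with p by lia. now rewrite Nat.eqb_refl, andb_true_r.
      replace (p + 1 =? j) with false by (symmetry; apply Nat.eqb_neq; lia). now rewrite !andb_false_r.
    + intros u Hu. unfold g1. rewrite port_act. rewrite compF_free; auto. replace (p + 2) with (Datatypes.S (p + 1)) by lia. reflexivity.
      apply desig_short; auto. simpl; lia.
Qed.

Lemma bits_diff i j n : i <> j -> i < 2 ^ n -> j < 2 ^ n -> exists p, p < n /\ Nat.testbit i p <> Nat.testbit j p.
Proof.
  intros Hij Hi Hj. apply NNPP. intros H. apply Hij. apply Nat.bits_inj. intros p.
  destruct (Nat.lt_ge_cases p n).
  - apply NNPP. intros H2. apply H. eauto.
  - assert (Z : forall a, a < 2 ^ n -> Nat.testbit a p = false).
    { intros a Ha. destruct (Nat.eq_dec a 0). subst. apply Nat.bits_0. apply Nat.bits_above_log2.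
      apply Nat.log2_lt_pow2 in Ha; lia. }
    now rewrite !Z.
Qed.

Lemma distinct_K d i j : 4 <= d -> i < j < 2 ^ (d - 3) -> ~ (forall g, Kg d i g <-> Kg d j g).
Proof.
  intros Hd [Hij Hj] H. destruct (bits_diff i j (d - 3)) as [p [Hp Hb]]; try lia.
  pose proof (Kg_act_compF d i (indw (zeros (p + 2))) Hd) as Ki. fold (g1 d i p) in Ki.
  pose proof Ki as Kj. apply H in Kj. destruct Ki as [_ Ki], Kj as [_ Kj].
  specialize (Ki [false] ltac:(discriminate)). specialize (Kj [false] ltac:(discriminate)).
  rewrite g1_J in Ki, Kj by auto. congruence.
Qed.


Fixpoint all_bools (m : nat) : list (list bool) :=
  match m with 0 => [[]] | Datatypes.S m => map (cons false) (all_bools m) ++ map (cons true) (all_bools m) end.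

Lemma all_bools_In m b : In b (all_bools m) <-> length b = m.
Proof.
  revert b; induction m; intros b; simpl.
  - split. intros [<-|[]]; auto. destruct b; simpl; try discriminate; auto.
  - rewrite in_app_iff, !in_map_iff. split.
    + intros [[c [<- Hc]]|[c [<- Hc]]]; apply IHm in Hc; simpl; auto.
    + destruct b as [|x b]; simpl; try discriminate. intros H. destruct x; [right|left]; exists b; split; auto; apply IHm; lia.
Qed.

Lemma map_NoDup_in {A B} (f : A -> B) l : (forall x y, In x l -> In y l -> f x = f y -> x = y) -> NoDup l -> NoDup (map f l).
Proof.
  intros Hf H. induction H as [|x l Hx Hl IH]; simpl; constructor.
  - rewrite in_map_iff. intros [y [Hy Hy']]. apply Hf in Hy; simpl; auto. subst; auto.
  - apply IH. intros; apply Hf; simpl; auto.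
Qed.

Lemma all_bools_NoDup m : NoDup (all_bools m).
Proof.
  induction m; simpl. constructor; auto. constructor.
  apply NoDup_app. apply map_NoDup_in; auto. intros; congruence.
  apply map_NoDup_in; auto. intros; congruence.
  intros a Ha Hb. rewrite in_map_iff in Ha, Hb. destruct Ha as [x [<- _]], Hb as [y [E _]]. discriminate.
Qed.

Lemma all_bools_length m : length (all_bools m) = 2 ^ m.
Proof. induction m; simpl; auto. rewrite length_app, !length_map, IHm. lia. Qed.

Definition assign (Fr : list word) (b : list bool) (x : word) : bool :=
  match find (fun p => if weq (fst p) x then true else false) (combine Fr b) with Some p => snd p | None => false end.

Lemma assign_map Fr a x : In x Fr -> assign Fr (map a Fr) x = a x.
Proof.
  unfold assign. induction Fr as [|y Fr IH]; simpl; intros H; [contradiction|].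
  destruct (weq y x). subst; auto. destruct H; [congruence|]. auto.
Qed.

Lemma map_assign Fr b : NoDup Fr -> length b = length Fr -> map (assign Fr b) Fr = b.
Proof.
  revert b; induction Fr as [|y Fr IH]; intros b ND L; destruct b as [|c b]; simpl in *; try lia; auto.
  inversion ND; subst. unfold assign at 1. simpl. destruct (weq y y); [|congruence]. simpl. f_equal.
  rewrite <- (IH b) at 2; auto. apply map_ext_in. intros x Hx. unfold assign. simpl.
  destruct (weq y x); auto. subst; contradiction.
Qed.

Lemma words_upto_In n w : In w (words_upto n) <-> length w <= n.
Proof. unfold words_upto. rewrite in_flat_map. split.
  intros [k [Hk Hw]]. apply in_seq in Hk. apply words_eq_In in Hw. lia.
  intros H. exists (length w). split. apply in_seq; lia. now apply words_eq_In. Qed.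

Lemma map_eq_in {A B} (f g : A -> B) l x : map f l = map g l -> In x l -> f x = g x.
Proof. induction l; simpl; intros E H; [contradiction|]. injection E; intros. destruct H; subst; auto. Qed.

Lemma card_gen (C : (word -> bool) -> Prop) (comp : (word -> bool) -> word -> bool) (Fr : list word) n :
  (forall a b, (forall x, a x = b x) -> C a -> C b) ->
  NoDup Fr -> (forall x, In x Fr -> length x < n) ->
  (forall f, C (comp f)) -> (forall f x, In x Fr -> comp f x = f x) ->
  (forall a f, C a -> (forall x, In x Fr -> f x = a x) -> forall x, length x < n -> comp f x = a x) ->
  card_level (fun g => is_aut g /\ C (port g)) n (2 ^ length Fr).
Proof.
  intros Cext ND HFr Hc Hfree Huniq.
  exists (map (fun b => restr n (act (comp (assign Fr b)))) (all_bools (length Fr))). split; [|split].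
  - now rewrite length_map, all_bools_length.
  - apply map_NoDup_in; [|apply all_bools_NoDup]. intros b b' Hb Hb' E.
    apply all_bools_In in Hb, Hb'. rewrite <- (map_assign Fr b), <- (map_assign Fr b') by auto.
    apply map_ext_in. intros x Hx. rewrite <- (Hfree (assign Fr b) x Hx), <- (Hfree (assign Fr b') x Hx).
    rewrite <- (port_act (comp (assign Fr b))), <- (port_act (comp (assign Fr b'))).
    unfold port. f_equal. unfold restr in E. apply (map_eq_in _ _ _ _ E). apply words_upto_In.
    rewrite length_app. simpl. specialize (HFr x Hx). lia.
  - intros x. rewrite in_map_iff. split.
    + intros [b [<- Hb]]. exists (act (comp (assign Fr b))). split; auto. split. apply is_aut_act.
      apply (Cext (comp (assign Fr b))); auto. intros; symmetry; apply port_act.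
    + intros [g [[Hg Cg] ->]]. exists (map (port g) Fr). split.
      * unfold restr. apply map_ext_in. intros w Hw. apply words_upto_In in Hw. rewrite (aut_act g Hg w).
        apply act_ext_upto. intros y Hy. apply (Huniq (port g)); auto. intros; apply assign_map; auto. lia.
      * apply all_bools_In. now rewrite length_map.
Qed.

Definition Fr_all n : list word := flat_map words_eq (seq 0 n).

Lemma Fr_all_In n x : In x (Fr_all n) <-> length x < n.
Proof. unfold Fr_all. rewrite in_flat_map. split.
  intros [k [Hk Hw]]. apply in_seq in Hk. apply words_eq_In in Hw. lia.
  intros H. exists (length x). split. apply in_seq; lia. now apply words_eq_In. Qed.

Lemma Fr_all_S n : Fr_all (Datatypes.S n) = Fr_all n ++ words_eq n.
Proof. unfold Fr_all. rewrite seq_S, flat_map_app. simpl. now rewrite app_nil_r. Qed.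

Lemma Fr_all_NoDup n : NoDup (Fr_all n).
Proof.
  induction n. constructor. rewrite Fr_all_S. apply NoDup_app; auto. apply words_eq_NoDup.
  intros a Ha Hb. apply Fr_all_In in Ha. apply words_eq_In in Hb. lia.
Qed.

Lemma Fr_all_length n : length (Fr_all n) + 1 = 2 ^ n.
Proof. induction n. reflexivity. rewrite Fr_all_S, length_app, words_eq_length. rewrite Nat.pow_succ_r'. lia. Qed.

Lemma card_aut n : card_level is_aut n (2 ^ length (Fr_all n)).
Proof.
  destruct (card_gen (fun _ => True) (fun f => f) (Fr_all n) n) as [s [H1 [H2 H3]]]; auto.
  apply Fr_all_NoDup. intros; now apply Fr_all_In. intros a f _ Hf x Hx. apply Hf, Fr_all_In; auto.
  exists s. split; auto. split; auto. intros x. rewrite H3. split; intros [g [Hg E]]; exists g; split; try tauto; auto.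
Qed.

Definition nd d (x : word) := negb (desig d x).

Lemma card_K d i n : 4 <= d -> card_level (Kg d i) n (2 ^ length (filter (nd d) (Fr_all n))).
Proof.
  intros Hd. apply (card_gen (Kc d i) (compF d i) (filter (nd d) (Fr_all n)) n).
  - intros a b E Ka. eapply Kc_ext; eauto.
  - apply NoDup_filter, Fr_all_NoDup.
  - intros x Hx. apply filter_In in Hx. apply Fr_all_In; tauto.
  - intros; now apply Kc_compF.
  - intros f x Hx. apply filter_In in Hx. unfold nd in Hx. apply compF_free; auto. destruct (desig d x); simpl in *; auto. destruct Hx; discriminate.
  - intros a f Ka Hf. apply compF_unique; auto. intros y Hy Hdy. apply Hf. apply filter_In. split. now apply Fr_all_In.
    unfold nd. now rewrite Hdy.
Qed.


Lemma sz_cons_le k c w : k <= length w -> sz k (c :: w) = sz k w.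
Proof. intros H. unfold sz. simpl length. replace (Datatypes.S (length w) - k) with (Datatypes.S (length w - k)) by lia. reflexivity. Qed.

Lemma sz_cons_eq c w : sz (Datatypes.S (length w)) (c :: w) = negb c && sz (length w) w.
Proof. unfold sz. simpl length. rewrite !Nat.sub_diag. reflexivity. Qed.

Lemma sz_step1 k L l : k <= L -> (forall w, In w l -> length w = L) ->
  length (filter (sz k) (flat_map (fun w => [false :: w; true :: w]) l)) = 2 * length (filter (sz k) l).
Proof.
  intros Hk. induction l as [|w l IH]; intros H; auto.
  cbn [flat_map app filter]. rewrite !sz_cons_le by (rewrite H; simpl; auto).
  specialize (IH ltac:(intros; apply H; simpl; auto)).
  destruct (sz k w); cbn [length]; lia.
Qed.

Lemma sz_step2 L l : (forall w, In w l -> length w = L) ->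
  length (filter (sz (Datatypes.S L)) (flat_map (fun w => [false :: w; true :: w]) l)) = length (filter (sz L) l).
Proof.
  induction l as [|w l IH]; intros H; auto.
  specialize (IH ltac:(intros; apply H; simpl; auto)).
  assert (Lw : length w = L) by (apply H; simpl; auto). subst L.
  cbn [flat_map app filter]. rewrite !sz_cons_eq. cbn [negb andb].
  destruct (sz (length w) w); cbn [length]; lia.
Qed.

Lemma sz_count L k : k <= L -> length (filter (sz k) (words_eq L)) = 2 ^ (L - k).
Proof.
  revert k; induction L; intros k Hk.
  - replace k with 0 by lia. reflexivity.
  - simpl words_eq. destruct (Nat.eq_dec k (Datatypes.S L)).
    + subst. rewrite sz_step2. rewrite IHL by lia. replace (Datatypes.S L - Datatypes.S L) with (L - L) by lia. reflexivity. intros; now apply words_eq_In.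
    + rewrite (sz_step1 k L) by (try lia; intros; now apply words_eq_In). rewrite IHL by lia.
      replace (Datatypes.S L - k) with (Datatypes.S (L - k)) by lia. rewrite Nat.pow_succ_r'. lia.
Qed.

Lemma filter_split_len {A} (p : A -> bool) l : length (filter p l) + length (filter (fun x => negb (p x)) l) = length l.
Proof. induction l; simpl; auto. destruct (p a); simpl; lia. Qed.

Lemma nd_count d L : 4 <= d -> d - 1 <= L -> length (filter (nd d) (words_eq L)) + 2 ^ (L - (d - 2)) = 2 ^ L.
Proof.
  intros Hd HL. rewrite <- (words_eq_length L). rewrite <- (filter_split_len (desig d) (words_eq L)).
  unfold nd. rewrite <- (sz_count L (d - 2)) by lia.
  replace (filter (desig d) (words_eq L)) with (filter (sz (d - 2)) (words_eq L)). lia.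
  apply filter_ext_in. intros x Hx. apply words_eq_In in Hx. unfold desig.
  replace (d - 1 <=? length x) with true; auto. symmetry. apply Nat.leb_le. lia.
Qed.

Lemma nd_short d L : 4 <= d -> L < d - 1 -> length (filter (nd d) (words_eq L)) = 2 ^ L.
Proof.
  intros Hd HL. rewrite <- (words_eq_length L). f_equal. rewrite forallb_filter_id; auto.
  apply forallb_forall. intros x Hx. apply words_eq_In in Hx. unfold nd. rewrite desig_short; auto. lia.
Qed.

Lemma count_K d n : 4 <= d -> d - 1 <= n -> length (filter (nd d) (Fr_all n)) + 2 ^ (n - (d - 2)) = 2 ^ n + 1.
Proof.
  intros Hd Hn. induction n as [|n IH]. lia.
  destruct (Nat.eq_dec n (d - 2)).
  - subst. rewrite Fr_all_S.
    assert (Hall : forall m, m <= d - 2 -> length (filter (nd d) (Fr_all m)) + 1 = 2 ^ m).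
    { induction m; intros Hm. reflexivity. rewrite Fr_all_S, filter_app, length_app, nd_short by lia.
      rewrite Nat.pow_succ_r'. specialize (IHm ltac:(lia)). lia. }
    rewrite filter_app, length_app, nd_short by lia. specialize (Hall (d - 2) (le_n _)).
    replace (Datatypes.S (d - 2) - (d - 2)) with 1 by lia. rewrite (Nat.pow_succ_r' 2 (d - 2)). simpl (2 ^ 1). lia.
  - rewrite Fr_all_S, filter_app, length_app. specialize (IH ltac:(lia)).
    pose proof (nd_count d n Hd ltac:(lia)).
    replace (Datatypes.S n - (d - 2)) with (Datatypes.S (n - (d - 2))) by lia.
    rewrite !Nat.pow_succ_r'. lia.
Qed.


Definition Lh (a : word -> bool) (w : word) (k : nat) : bool := xsum (words_eq k) (fun u => a (w ++ false :: u)).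

Lemma S_split a w k : S a w (Datatypes.S k) =
  xorb (Lh a w k) (xsum (words_eq k) (fun u => a (w ++ true :: u))).
Proof. unfold S, Lh. apply (xsum_words_S (fun u => a (w ++ u)) k). Qed.

Lemma Lh_cocycle g h w k : is_aut g -> is_aut h ->
  Lh (port (fun x => g (h x))) w k =
  xorb (xorb (Lh (port h) w k) (Lh (port g) (h w) k)) (port h w && S (port g) (h w) (Datatypes.S k)).
Proof.
  intros Hg Hh. unfold Lh.
  rewrite (xsum_ext_in _ _ (fun u => xorb (port h (w ++ false :: u))
            (port g (h w ++ port h w :: section h (w ++ [false]) u)))).
  - rewrite xsum_xor.
    assert (E : xsum (words_eq k) (fun u : list bool => port g (h w ++ port h w :: section h (w ++ [false]) u)) =
                xsum (words_eq k) (fun u => port g (h w ++ port h w :: u)))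
      by exact (xsum_section h (w ++ [false]) k (fun u => port g (h w ++ port h w :: u)) Hh).
    unfold word in E |- *. rewrite E.
    rewrite S_split. unfold Lh. destruct (port h w).
    + assert (Bk : forall a b c : bool, xorb a c = xorb (xorb a b) (true && xorb b c)) by (intros [] [] []; reflexivity).
      apply Bk.
    + simpl. now rewrite xorb_false_r.
  - intros u _. rewrite port_comp by auto. f_equal.
    replace (w ++ false :: u) with ((w ++ [false]) ++ u) by (now rewrite <- app_assoc).
    rewrite aut_app by auto. rewrite aut_snoc by auto. rewrite <- app_assoc. reflexivity.
Qed.

Definition T (d i : nat) (a : word -> bool) (w : word) : bool :=
  xorb (Lh a w (d - 3)) (xsum (seq 1 (d - 3)) (fun j => Nat.testbit i (j - 1) && Lh a w (j - 1))).

Lemma T_cocycle d i g h w : 4 <= d -> is_aut g -> is_aut h ->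
  T d i (port (fun x => g (h x))) w =
  xorb (xorb (T d i (port h) w) (T d i (port g) (h w)))
       (port h w && xorb (S (port g) (h w) (d - 2)) (Jsum d i (port g) (h w))).
Proof.
  intros Hd Hg Hh. unfold T. rewrite Lh_cocycle by auto.
  replace (Datatypes.S (d - 3)) with (d - 2) by lia.
  rewrite (xsum_ext_in _ _ (fun j => xorb (xorb (Nat.testbit i (j - 1) && Lh (port h) w (j - 1))
                                                (Nat.testbit i (j - 1) && Lh (port g) (h w) (j - 1)))
                                          (port h w && (Nat.testbit i (j - 1) && S (port g) (h w) j)))).
  - rewrite !xsum_xor, xsum_andl. unfold Jsum.
    generalize (Lh (port h) w (d - 3)), (Lh (port g) (h w) (d - 3)), (S (port g) (h w) (d - 2)), (port h w),
      (xsum (seq 1 (d - 3)) (fun j => Nat.testbit i (j - 1) && Lh (port h) w (j - 1))),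
      (xsum (seq 1 (d - 3)) (fun j => Nat.testbit i (j - 1) && Lh (port g) (h w) (j - 1))),
      (xsum (seq 1 (d - 3)) (fun j => Nat.testbit i (j - 1) && S (port g) (h w) j)).
    intros [] [] [] [] [] [] []; reflexivity.
  - intros j Hj. apply in_seq in Hj. rewrite Lh_cocycle by auto. replace (Datatypes.S (j - 1)) with j by lia.
    destruct (Nat.testbit i (j - 1)), (Lh (port h) w (j - 1)), (Lh (port g) (h w) (j - 1)), (port h w), (S (port g) (h w) j); reflexivity.
Qed.

Definition phi (d i m : nat) (g : tmap) : bool := xsum (words_eq m) (fun w => T d i (port g) w).

Lemma phi_hom d i m g h : 4 <= d -> 1 <= m -> is_aut g -> is_aut h -> Kc d i (port g) ->
  phi d i m (fun x => g (h x)) = xorb (phi d i m h) (phi d i m g).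
Proof.
  intros Hd Hm Hg Hh Kg'. unfold phi.
  rewrite (xsum_ext_in _ _ (fun w => xorb (T d i (port h) w) (T d i (port g) (h w)))).
  - rewrite xsum_xor. f_equal. exact (xsum_aut h m (fun w => T d i (port g) w) Hh).
  - intros w Hw. apply words_eq_In in Hw. rewrite T_cocycle by auto. rewrite Kg'.
    rewrite xorb_nilpotent, andb_false_r. apply xorb_false_r.
    apply aut_nonnil; auto. intros E; rewrite E in Hw; simpl in Hw; lia.
Qed.

Lemma T_ext d i a b w : (forall u, length u <= d - 3 -> a (w ++ false :: u) = b (w ++ false :: u)) -> T d i a w = T d i b w.
Proof.
  intros H. unfold T, Lh. f_equal. apply xsum_ext_in. intros u Hu; apply words_eq_In in Hu. apply H; lia.
  apply xsum_ext_in. intros j Hj. apply in_seq in Hj. f_equal. apply xsum_ext_in. intros u Hu; apply words_eq_In in Hu. apply H; lia.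
Qed.

Lemma T_zero d i a w : (forall u, length u <= d - 3 -> a (w ++ false :: u) = false) -> T d i a w = false.
Proof.
  intros H. rewrite (T_ext d i a (fun _ => false)) by auto. unfold T, Lh. rewrite !xsum_false.
  rewrite xsum_zero; auto. intros. now rewrite xsum_false, andb_false_r.
Qed.

Lemma phi_zero_port d i m g : (forall x, port g x = false) -> phi d i m g = false.
Proof. intros H. unfold phi. apply xsum_zero. intros. apply T_zero. auto. Qed.

Lemma phi_local d i m n h g : 4 <= d -> agree n h g -> m + d <= n -> phi d i m h = phi d i m g.
Proof.
  intros Hd Ag Hn. unfold phi. apply xsum_ext_in. intros w Hw. apply words_eq_In in Hw. apply T_ext.
  intros u Hu. unfold port. rewrite Ag; auto. rewrite !length_app; simpl; lia.
Qed.


Definition pm d m : word := zeros m ++ true :: zeros (d - 3).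
Definition gm d i m : tmap := act (compF d i (indw (pm d m))).

Lemma zeros_length k : length (zeros k) = k.
Proof. apply repeat_length. Qed.

Lemma indw_app w0 u0 w u : length w = length w0 -> indw (w0 ++ u0) (w ++ u) = indw w0 w && indw u0 u.
Proof.
  intros L. unfold indw. destruct (weq (w ++ u) (w0 ++ u0)) as [e|ne].
  - destruct (app_eq_len w u w0 u0 L e) as [-> ->]. destruct (weq w0 w0), (weq u0 u0); simpl; auto; congruence.
  - destruct (weq w w0), (weq u u0); subst; auto.
Qed.

Lemma indw_diff_len x0 x : length x <> length x0 -> indw x0 x = false.
Proof. intros H. unfold indw. destruct (weq x x0); subst; auto. congruence. Qed.

Lemma cm_zero d i m x : 4 <= d -> length x < m + d - 2 -> compF d i (indw (pm d m)) x = false.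
Proof.
  intros Hd Hx. apply (compF_unique d i _ (fun _ => false) Hd) with (n := m + d - 2); auto.
  - intros v _. rewrite S_zero, Jsum_zero; auto.
  - intros y Hy _. apply indw_diff_len. unfold pm. rewrite length_app. simpl. rewrite !zeros_length. lia.
Qed.

Lemma cm_level d i m w u : 4 <= d -> 1 <= m -> length w = m -> length u = d - 3 ->
  compF d i (indw (pm d m)) (w ++ false :: u) = indw (zeros m) w && indw (zeros (d - 3)) u.
Proof.
  intros Hd Hm Hw Hu.
  assert (Hnil : w <> []) by (intros E; rewrite E in Hw; simpl in Hw; lia).
  assert (Lfu : length (false :: u) = d - 2) by (simpl; lia).
  assert (Ep : forall u', indw (pm d m) (w ++ u') = indw (zeros m) w && indw (true :: zeros (d - 3)) u').
  { intros u'. unfold pm. apply indw_app. now rewrite zeros_length. }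
  destruct (forallb negb u) eqn:Ez.
  - assert (Uz : u = zeros (d - 3)) by (apply forallb_negb_zeros in Ez; now rewrite Hu in Ez).
    rewrite compF_eq by auto. rewrite desig_app by auto. simpl (forallb negb (false :: u)). rewrite Ez.
    rewrite firstn_app_len by auto.
    rewrite (Jsum_ext d i _ (fun _ => false) w w).
    + rewrite Jsum_zero by auto. simpl xorb.
      rewrite (xsum_ext_in _ _ (fun u' => indw (zeros m) w && indw (true :: zeros (d - 3)) u')) by (intros; apply Ep).
      rewrite xsum_andl. unfold indw at 2. rewrite (xsum_ind weq).
      * destruct (in_dec weq (true :: zeros (d - 3)) (filter nz (words_eq (d - 2)))) as [Hi|Hi].
        rewrite Uz. unfold indw. destruct (weq w (zeros m)), (weq (zeros (d - 3)) (zeros (d - 3))); simpl; auto; congruence.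
        exfalso. apply Hi. apply filter_In. split. apply words_eq_In. simpl. rewrite zeros_length. lia. reflexivity.
      * apply NoDup_filter, words_eq_NoDup.
    + intros j Hj. apply S_ext. intros u' Hu'. apply cm_zero; auto. rewrite length_app. lia.
  - rewrite compF_free; auto. rewrite Ep. replace (indw (true :: zeros (d - 3)) (false :: u)) with false
      by (unfold indw; destruct weq; congruence).
    replace (indw (zeros (d - 3)) u) with false. now rewrite !andb_false_r.
    unfold indw. destruct (weq u (zeros (d - 3))) as [e|]; auto. exfalso. subst u.
    assert (forallb negb (zeros (d - 3)) = true) by (apply forallb_negb_zeros; now rewrite zeros_length). congruence.
    rewrite desig_app by auto. simpl. auto.
Qed.

Lemma phi_gm_lt d i m m' : 4 <= d -> m' < m -> phi d i m' (gm d i m) = false.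
Proof.
  intros Hd Hm. unfold phi. apply xsum_zero. intros w Hw. apply words_eq_In in Hw. apply T_zero.
  intros u Hu. unfold gm. rewrite port_act. apply cm_zero; auto. rewrite length_app; simpl; lia.
Qed.

Lemma phi_gm_eq d i m : 4 <= d -> 1 <= m -> phi d i m (gm d i m) = true.
Proof.
  intros Hd Hm. unfold phi.
  rewrite (xsum_ext_in _ _ (indw (zeros m))).
  - rewrite xsum_ind_words. rewrite zeros_length. apply Nat.eqb_refl.
  - intros w Hw. apply words_eq_In in Hw. unfold T.
    rewrite (xsum_zero (seq 1 (d - 3))).
    + rewrite xorb_false_r. unfold Lh.
      rewrite (xsum_ext_in _ _ (fun u => indw (zeros m) w && indw (zeros (d - 3)) u)).
      * rewrite xsum_andl, xsum_ind_words, zeros_length, Nat.eqb_refl. apply andb_true_r.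
      * intros u Hu. apply words_eq_In in Hu. unfold gm. rewrite port_act. apply cm_level; auto.
    + intros j Hj. apply in_seq in Hj. unfold Lh. rewrite xsum_zero. apply andb_false_r.
      intros u Hu. apply words_eq_In in Hu. unfold gm. rewrite port_act. apply cm_zero; auto.
      rewrite length_app; simpl; lia.
Qed.


Fixpoint vxor (a b : list bool) : list bool :=
  match a, b with x :: a', y :: b' => xorb x y :: vxor a' b' | _, _ => [] end.

Lemma vxor_map {A} (f g : A -> bool) l : vxor (map f l) (map g l) = map (fun x => xorb (f x) (g x)) l.
Proof. induction l; simpl; auto. now rewrite IHl. Qed.

Lemma vxor_len a b : length a = length b -> length (vxor a b) = length a.
Proof. revert b; induction a as [|x a IHa]; intros [|y b]; simpl; intros; auto; try lia. Qed.

Lemma vxor_comm a b : vxor a b = vxor b a.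
Proof. revert b; induction a; intros [|y b]; simpl; auto. now rewrite IHa, xorb_comm. Qed.

Lemma vxor_assoc a b c : vxor (vxor a b) c = vxor a (vxor b c).
Proof. revert b c; induction a; intros [|y b] [|z c]; simpl; auto. now rewrite IHa, xorb_assoc. Qed.

Lemma vxor_cancel a b : length a = length b -> vxor a (vxor a b) = b.
Proof. revert b; induction a; intros [|y b]; simpl; intros; auto; try lia. rewrite IHa by lia.
  now rewrite <- xorb_assoc, xorb_nilpotent. Qed.

Lemma nth_vxor a b q : length a = length b -> nth q (vxor a b) false = xorb (nth q a false) (nth q b false).
Proof. revert b q; induction a; intros [|y b] [|q]; simpl; intros; auto; try lia; try (apply IHa; lia). Qed.

Fixpoint SS (l : list (list bool)) (M : nat) : list (list bool) :=
  match l with [] => [repeat false M] | x :: l' => SS l' M ++ map (vxor x) (SS l' M) end.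

Lemma SS_len l M : length (SS l M) = 2 ^ length l.
Proof. induction l; simpl; auto. rewrite length_app, length_map, IHl. lia. Qed.

Lemma SS_elem_len l M : (forall z, In z l -> length z = M) -> forall x, In x (SS l M) -> length x = M.
Proof.
  induction l as [|a l IH]; simpl; intros H x Hx.
  - destruct Hx as [<-|[]]. apply repeat_length.
  - apply in_app_iff in Hx. destruct Hx as [Hx|Hx]. apply IH; auto.
    apply in_map_iff in Hx. destruct Hx as [z [<- Hz]]. rewrite vxor_len; auto. rewrite (IH (fun z H' => H z (or_intror H')) z Hz); auto.
Qed.

Lemma SS_closed l M : (forall z, In z l -> length z = M) -> forall x y, In x (SS l M) -> In y l -> In (vxor x y) (SS l M).
Proof.
  induction l as [|a l IH]; simpl; intros H x y Hx Hy; [contradiction|].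
  assert (H' : forall z, In z l -> length z = M) by auto.
  pose proof (SS_elem_len l M H') as EL.
  apply in_app_iff in Hx. apply in_app_iff. destruct Hx as [Hx|Hx]; destruct Hy as [<-|Hy].
  - right. rewrite vxor_comm. now apply in_map.
  - left. now apply IH.
  - apply in_map_iff in Hx. destruct Hx as [z [<- Hz]]. left. rewrite vxor_comm. rewrite vxor_cancel; auto.
    rewrite H, EL; auto.
  - apply in_map_iff in Hx. destruct Hx as [z [<- Hz]]. right. rewrite vxor_assoc. apply in_map. now apply IH.
Qed.

Lemma SS_tri l M k : (forall z, In z l -> length z = M) ->
  (forall idx, idx < length l -> nth (k + idx) (nth idx l []) false = true /\
       forall q, q < k + idx -> nth q (nth idx l []) false = false) ->
  NoDup (SS l M) /\ forall x, In x (SS l M) -> forall q, q < k -> nth q x false = false.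
Proof.
  revert k; induction l as [|a l IH]; intros k HL Ht; simpl.
  - split. repeat constructor; auto. intros x [<-|[]] q _. apply nth_repeat.
  - assert (H' : forall z, In z l -> length z = M) by (intros; apply HL; simpl; auto).
    pose proof (SS_elem_len l M H') as EL.
    destruct (IH (Datatypes.S k) H') as [ND Z].
    { intros idx Hidx. destruct (Ht (Datatypes.S idx) ltac:(simpl; lia)) as [T1 T2]. simpl in T1, T2.
      replace (Datatypes.S k + idx) with (k + Datatypes.S idx) by lia. split; auto. }
    destruct (Ht 0 ltac:(simpl; lia)) as [A1 A2]. simpl in A1, A2. rewrite Nat.add_0_r in A1, A2.
    assert (La : length a = M) by (apply HL; simpl; auto).
    split.
    + apply NoDup_app; auto.
      * apply map_NoDup_in; auto. intros x y Hx Hy E. rewrite <- (vxor_cancel a x) by (rewrite La, (EL x Hx); auto).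
        rewrite E. apply vxor_cancel. rewrite La, (EL y Hy); auto.
      * intros x Hx Hy. apply in_map_iff in Hy. destruct Hy as [z [Ez Hz]].
        pose proof (Z x Hx k ltac:(lia)) as Zx. rewrite <- Ez in Zx. rewrite nth_vxor in Zx by (rewrite La, (EL z Hz); auto).
        rewrite A1, (Z z Hz k ltac:(lia)) in Zx. discriminate.
    + intros x Hx q Hq. apply in_app_iff in Hx. destruct Hx as [Hx|Hx]. apply Z; auto; lia.
      apply in_map_iff in Hx. destruct Hx as [z [<- Hz]]. rewrite nth_vxor by (rewrite La, (EL z Hz); auto).
      rewrite A2, Z; auto; lia.
Qed.

Lemma nth_map_seq {B} (f : nat -> B) s M q dflt : q < M -> nth q (map f (seq s M)) dflt = f (s + q).
Proof.
  revert s q; induction M; intros s q Hq; [lia|]. destruct q; simpl. f_equal; lia.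
  rewrite IHM by lia. f_equal; lia.
Qed.

Definition Phi d i M g : list bool := map (fun q => phi d i (Datatypes.S q) g) (seq 0 M).

Lemma Phi_len d i M g : length (Phi d i M g) = M.
Proof. unfold Phi. now rewrite length_map, length_seq. Qed.

Lemma Phi_hom d i M g h : 4 <= d -> Kg d i g -> Kg d i h ->
  Phi d i M (fun x => g (h x)) = vxor (Phi d i M h) (Phi d i M g).
Proof.
  intros Hd [Hg Kg'] [Hh _]. unfold Phi. rewrite vxor_map. apply map_ext. intros q. apply phi_hom; auto; lia.
Qed.

Lemma Phi_id d i M g : (forall w, g w = w) -> Phi d i M g = repeat false M.
Proof.
  intros E. unfold Phi. rewrite (map_ext _ (fun _ => false)). rewrite map_const. now rewrite length_seq.
  intros q. apply phi_zero_port. intros. now apply port_idlike.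
Qed.

Lemma notfg d i : 4 <= d -> ~ top_fin_gen (Kg d i).
Proof.
  intros Hd [gs [Hgs Hden]].
  set (M := length gs + 1).
  set (L := map (Phi d i M) gs).
  assert (LL : forall z, In z L -> length z = M). { intros z Hz. unfold L in Hz. apply in_map_iff in Hz. destruct Hz as [g [<- _]]. apply Phi_len. }
  assert (Gen : forall h, gen gs h -> Kg d i h /\ In (Phi d i M h) (SS L M)).
  { induction 1 as [|s h Hs Hh [Kh IH]|s t h Hs E1 E2 Hh [Kh IH]].
    - split. apply Kg_id. rewrite Phi_id by auto. clear. induction L; simpl; auto. apply in_app_iff; auto.
    - split. apply Kg_comp; auto. rewrite Phi_hom; auto. apply SS_closed; auto. unfold L; now apply in_map.
    - assert (Kt : Kg d i t) by (apply (Kg_inv d i s t); auto).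
      assert (Pt : Phi d i M t = Phi d i M s).
      { unfold Phi. apply map_ext. intros q. destruct (Hgs s Hs) as [Hsa Ks]. destruct Kt as [Hta _].
        pose proof (phi_hom d i (Datatypes.S q) s t Hd ltac:(lia) Hsa Hta Ks) as C.
        rewrite phi_zero_port in C by (intros; now apply port_idlike).
        destruct (phi d i (Datatypes.S q) t), (phi d i (Datatypes.S q) s); simpl in C; congruence. }
      split. apply Kg_comp; auto. rewrite Phi_hom, Pt; auto. apply SS_closed; auto. unfold L; now apply in_map. }
  set (vs := map (fun q => Phi d i M (gm d i (Datatypes.S q))) (seq 0 M)).
  assert (Vlen : forall z, In z vs -> length z = M).
  { intros z Hz. unfold vs in Hz. apply in_map_iff in Hz. destruct Hz as [q [<- _]]. apply Phi_len. }
  assert (Real : forall l, (forall z, In z l -> exists g, Kg d i g /\ Phi d i M g = z) ->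
                 forall x, In x (SS l M) -> exists g, Kg d i g /\ Phi d i M g = x).
  { induction l as [|a l IH]; simpl; intros H x Hx.
    - destruct Hx as [<-|[]]. exists (fun w => w). split. apply Kg_id. apply Phi_id; auto.
    - apply in_app_iff in Hx. destruct Hx as [Hx|Hx]. apply IH; auto.
      apply in_map_iff in Hx. destruct Hx as [z [<- Hz]]. destruct (IH (fun z H' => H z (or_intror H')) z Hz) as [gz [Kz Ez]].
      destruct (H a (or_introl eq_refl)) as [ga [Ka Ea]]. exists (fun w => gz (ga w)). split. apply Kg_comp; auto.
      rewrite Phi_hom by auto. now rewrite Ea, Ez. }
  destruct (SS_tri vs M 0 Vlen) as [ND _].
  { intros idx Hidx. unfold vs in Hidx. rewrite length_map, length_seq in Hidx.
    unfold vs. rewrite nth_map_seq by auto. simpl. unfold Phi. split.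
    - rewrite nth_map_seq by auto. apply phi_gm_eq; auto. lia.
    - intros q Hq. rewrite nth_map_seq by lia. apply phi_gm_lt; auto. lia. }
  assert (Inc : incl (SS vs M) (SS L M)).
  { intros x Hx. destruct (Real vs) with (x := x) as [g [Kg' <-]]; auto.
    - intros z Hz. unfold vs in Hz. apply in_map_iff in Hz. destruct Hz as [q [<- _]]. exists (gm d i (Datatypes.S q)).
      split; auto. unfold gm. split. apply is_aut_act. eapply Kc_ext. intros x0. symmetry. apply port_act. apply Kc_compF; auto.
    - destruct (Hden (M + d) g Kg') as [h [Gh Ag]]. destruct (Gen h Gh) as [_ Ih].
      replace (Phi d i M g) with (Phi d i M h); auto. unfold Phi. apply map_ext_in. intros q Hq. apply in_seq in Hq.
      apply (phi_local d i _ (M + d)); auto. lia. }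
  pose proof (NoDup_incl_length ND Inc) as C. rewrite !SS_len in C. unfold vs, L in C.
  rewrite length_map, length_seq, length_map in C. unfold M in C.
  pose proof (Nat.pow_lt_mono_r 2 (length gs) (length gs + 1) ltac:(lia) ltac:(lia)). lia.
Qed.

Open Scope R_scope.

Lemma log2_pow k : log2 (INR (2 ^ k)) = INR k.
Proof.
  unfold log2. rewrite pow_INR. replace (INR 2) with 2 by (simpl; lra). rewrite ln_pow by lra.
  assert (0 < ln 2) by (pose proof ln_lt_2; lra). field. lra.
Qed.

Lemma ratio_eq (X Y Z : R) : 1 < X -> 0 < Y -> Z * Y = 2 * X ->
  (X + 1 - Z) / (X - 1) = (1 - 2 / Y) + (2 * Y - 2) / (Y * (X - 1)).
Proof.
  intros HX HY HZ. assert (EZ : Z = 2 * X / Y) by (apply (Rmult_eq_reg_r Y); [|lra]; field_simplify; lra).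
  rewrite EZ. field. lra.
Qed.

Lemma Hdim_K d i : (4 <= d)%nat -> Hdim (Kg d i) (1 - 2 / 2 ^ (d - 1)).
Proof.
  intros Hd. exists (fun n => 2 ^ length (filter (nd d) (Fr_all n)))%nat, (fun n => 2 ^ length (Fr_all n))%nat.
  split; [intros; now apply card_K|]. split; [intros; apply card_aut|].
  set (Y := 2 ^ (d - 1)).
  assert (HY : 2 <= Y). { unfold Y. replace (d - 1)%nat with (Datatypes.S (d - 2))%nat by lia. simpl. pose proof (pow_R1_Rle 2 (d - 2)%nat). lra. }
  assert (Key : forall n, (d - 1 <= n)%nat ->
     let u := log2 (INR (2 ^ length (filter (nd d) (Fr_all n)))) / log2 (INR (2 ^ length (Fr_all n))) in
     let X := 2 ^ n in
     1 < X /\ u = (1 - 2 / Y) + (2 * Y - 2) / (Y * (X - 1))).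
  { intros n Hn u X. assert (HX : 2 <= X). { unfold X. replace n with (Datatypes.S (n - 1))%nat by lia. simpl. pose proof (pow_R1_Rle 2 (n - 1)%nat). lra. }
    split. lra. unfold u. rewrite !log2_pow.
    pose proof (count_K d n Hd Hn) as C1. pose proof (Fr_all_length n) as C2.
    apply (f_equal INR) in C1, C2. rewrite plus_INR, pow_INR in C1, C2. rewrite plus_INR, pow_INR in C1.
    replace (INR 2) with 2 in * by (simpl; lra). simpl (INR 1) in *.
    set (Z := 2 ^ (n - (d - 2))%nat) in C1.
    replace (INR (length (filter (nd d) (Fr_all n)))) with (X + 1 - Z) by (unfold X; lra).
    replace (INR (length (Fr_all n))) with (X - 1) by (unfold X; lra).
    apply ratio_eq; try lra. unfold Z, Y, X. rewrite <- pow_add. replace (n - (d - 2) + (d - 1))%nat with (Datatypes.S n) by lia. simpl. lra. }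
  split.
  - intros eps Heps. exists (d - 1)%nat. intros n Hn. destruct (Key n Hn) as [HX Hu]. simpl in Hu. rewrite Hu.
    assert (0 < (2 * Y - 2) / (Y * (2 ^ n - 1))). { apply Rdiv_lt_0_compat; [lra|]. apply Rmult_lt_0_compat; lra. }
    lra.
  - intros eps Heps N. destruct (INR_unbounded (2 / eps + 1)) as [m Hm].
    set (n := (N + (d - 1) + m)%nat). exists n. split. unfold n; lia.
    destruct (Key n ltac:(unfold n; lia)) as [HX Hu]. simpl in Hu. rewrite Hu.
    assert (Hn : INR m < 2 ^ n). { pose proof (Nat.pow_gt_lin_r 2 n ltac:(lia)). apply lt_INR in H. rewrite pow_INR in H.
      replace (INR 2) with 2 in H by (simpl; lra). assert (INR m <= INR n) by (apply le_INR; unfold n; lia). lra. }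
    assert (Hb : (2 * Y - 2) / (Y * (2 ^ n - 1)) < 2 / (2 ^ n - 1)).
    { apply (Rmult_lt_reg_r (Y * (2 ^ n - 1))). apply Rmult_lt_0_compat; lra.
      field_simplify; try lra. }
    assert (Hc : 2 / (2 ^ n - 1) < eps).
    { apply (Rmult_lt_reg_r (2 ^ n - 1)). lra. field_simplify; try lra.
      assert (2 / eps * eps = 2) by (field; lra). assert (eps * (2 ^ n - 1) > eps * (2 / eps)) by (apply Rmult_lt_compat_l; lra). lra. }
    lra.
Qed.

Close Scope R_scope.
Theorem mainTheorem16 (d : nat) (hd : 4 <= d) :
  exists F : nat -> tmap -> Prop,
    (forall i j, i < j < 2 ^ (d - 3) -> ~ (forall g, F i g <-> F j g)) /\
    (forall i, i < 2 ^ (d - 3) ->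
       defined_by_patterns_of_size (F i) d /\
       Hdim (F i) (1 - 2 / 2 ^ (d - 1))%R /\
       ~ top_fin_gen (F i)).
Proof.
  exists (fun i => Kg d i). split.
  - intros i j Hij. apply distinct_K; auto.
  - intros i Hi. split; [split|split].
    + apply fc_K; auto.
    + apply minimal_K; auto.
    + apply Hdim_K; auto.
    + apply notfg; auto.
Qed.
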